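(* Let $s\ge 1$, $1\le M<N$ be integers and let $\tilde\phi:(0,\infty)\to\mathbb{R}$ be of class $C^4$, such that for some $r^*>0$ one has $\tilde\phi''(r)\ge 0$ for $r\in(0,r^*]$ and $\tilde\phi''(r)<0$ for $r>r^*$, and such that $\tilde\phi$ and its derivatives decay at infinity. Let $(y_\ell)_{\ell\in\mathbb{Z}}$ be an increasing chain with $y_{\ell+1+2N}-y_{\ell+2N}=y_{\ell+1}-y_\ell$ for all $\ell$, with atomistic energy $$\mathcal{E}^a(\mathbf{y})=\sum_{k=1}^{s}\sum_{\ell=-N+1}^{N}\tilde\phi(y_{\ell+k-1}-y_{\ell-1}).$$ Let $-N=\ell_{-M}<\ell_{-M+1}<\dots<\ell_M=N$ be integers, extended by $\ell_{j+2M}=\ell_j+2N$, set $Y_j=y_{\ell_j}$, $\tilde\nu_j=\ell_j-\ell_{j-1}$ and $\tilde r_j=(Y_j-Y_{j-1})/\tilde\nu_j$, and assume $\tilde\nu_j\ge s$ for all $j$ and that $\mathbf y$ is the piecewise linear interpolation of the $Y_j$, i.e. $y_{\ell_{j-1}+i}=Y_{j-1}+i\tilde r_j$ for $0\le i\le \tilde\nu_j$; write $\mathcal{E}^a(\mathbf{Y})$ for $\mathcal{E}^a(\mathbf y)$. Fix $\epsilon>0$ and define $\phi(r)=\epsilon^{-1}\tilde\phi(\epsilon r)$, $\phi_{cb}(r)=\sum_{k=1}^s\phi(kr)$, $X_j=\epsilon\ell_j$, $H_j=(X_j-X_{j-2})/2$, $\nu_j=\epsilon\tilde\nu_j$, $Y'_j=(Y_j-Y_{j-1})/(X_j-X_{j-1})$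 $(=\tilde r_j/\epsilon)$, $Y''_j=(Y'_j-Y'_{j-1})/H_j$, and the local QC energy $\mathcal{E}^{qc}(\mathbf{Y})=\sum_{j=-M+1}^{M}\nu_j\phi_{cb}(Y'_j)$. Then there exist scalars $\eta_{jk}\in[0,1]$ ($j=-M+1,\dots,M$, $k=2,\dots,s$) such that $$\mathcal{E}^a(\mathbf{Y})=\mathcal{E}^{qc}(\mathbf{Y})+\sum_{j=-M+1}^{M}H_{j+1}C_j\left\{\epsilon H_{j+1}(Y''_{j+1})^2\right\},\qquad C_j:=\sum_{k=2}^{s}\frac{-k^3+k}{12}\,\phi''\Big(k\big(\eta_{jk}Y'_j+(1-\eta_{jk})Y'_{j+1}\big)\Big).$$ (In this sense $\mathcal{E}^{qc}$ is formally a second order approximation of $\mathcal{E}^a$.)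
   Context: All indexed quantities $Y_j,\tilde r_j, X_j, H_j, Y'_j, Y''_j$ are extended to all $j\in\mathbb{Z}$ via the periodic extension of the indices $\ell_j$ and the periodicity of the chain (so e.g. $Y'_{M+1}=Y'_{-M+1}$). *)

(* Defs.v *)
From Stdlib Require Import Reals ZArith List Lra Lia.
From Coquelicot Require Import Coquelicot.
Open Scope R_scope.

Definition sumZ (a b : Z) (f : Z -> R) : R :=
  fold_right Rplus 0
    (map (fun i : nat => f (a + Z.of_nat i)%Z) (seq 0 (Z.to_nat (b - a + 1)))).

Definition C4_pos (f : R -> R) : Prop :=
  forall r, 0 < r ->
    (forall n, (n <= 4)%nat -> ex_derive_n f n r) /\ continuous (Derive_n f 4) r.

Definition decays_at_infty (f : R -> R) : Prop :=
  forall n, (n <= 4)%nat -> is_lim (Derive_n f n) p_infty 0.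

Definition E_atom (s N : Z) (phit : R -> R) (y : Z -> R) : R :=
  sumZ 1 s (fun k => sumZ (- N + 1) N (fun l => phit (y (l + k - 1)%Z - y (l - 1)%Z))).

Definition phi_eps (eps : R) (phit : R -> R) (r : R) : R := / eps * phit (eps * r).

Definition phi_cb (s : Z) (eps : R) (phit : R -> R) (r : R) : R :=
  sumZ 1 s (fun k => phi_eps eps phit (IZR k * r)).

Definition Xn (eps : R) (ell : Z -> Z) (j : Z) : R := eps * IZR (ell j).
Definition Hn (eps : R) (ell : Z -> Z) (j : Z) : R :=
  (Xn eps ell j - Xn eps ell (j - 2)%Z) / 2.
Definition nun (eps : R) (ell : Z -> Z) (j : Z) : R := eps * IZR (ell j - ell (j - 1))%Z.
Definition Yn (y : Z -> R) (ell : Z -> Z) (j : Z) : R := y (ell j).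
Definition Y1 (eps : R) (y : Z -> R) (ell : Z -> Z) (j : Z) : R :=
  (Yn y ell j - Yn y ell (j - 1)%Z) / (Xn eps ell j - Xn eps ell (j - 1)%Z).
Definition Y2 (eps : R) (y : Z -> R) (ell : Z -> Z) (j : Z) : R :=
  (Y1 eps y ell j - Y1 eps y ell (j - 1)%Z) / Hn eps ell j.

Definition E_qc (s M : Z) (eps : R) (phit : R -> R) (y : Z -> R) (ell : Z -> Z) : R :=
  sumZ (- M + 1) M (fun j => nun eps ell j * phi_cb s eps phit (Y1 eps y ell j)).

(* Main.v *)
Require Import Defs.
From Stdlib Require Import Reals ZArith List Lra Lia Classical IndefiniteDescription Rsqrt_def Ranalysis5.
From Coquelicot Require Import Coquelicot.
Open Scope R_scope.

Lemma fold_app_one (l l2 : list R) :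
  fold_right Rplus 0 (l ++ l2) = fold_right Rplus 0 l + fold_right Rplus 0 l2.
Proof. induction l; simpl; [ring| rewrite IHl; ring]. Qed.

Lemma sumZ_empty a b f : (b < a)%Z -> sumZ a b f = 0.
Proof. intros H. unfold sumZ. replace (Z.to_nat (b - a + 1)) with 0%nat by lia. reflexivity. Qed.

Lemma sumZ_last a b f : (a <= b)%Z -> sumZ a b f = sumZ a (b-1) f + f b.
Proof.
  intros H. unfold sumZ.
  replace (Z.to_nat (b - a + 1)) with (S (Z.to_nat (b - 1 - a + 1))) by lia.
  rewrite seq_S, map_app, fold_app_one. simpl. rewrite Rplus_0_r. f_equal. f_equal. lia.
Qed.

Lemma sumZ_ind (a : Z) (P : Z -> Prop) :
  P (a-1)%Z -> (forall b, (a <= b)%Z -> P (b-1)%Z -> P b) -> forall b, (a - 1 <= b)%Z -> P b.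
Proof.
  intros H0 HS b Hb.
  replace b with (a - 1 + Z.of_nat (Z.to_nat (b - a + 1)))%Z by lia.
  generalize (Z.to_nat (b - a + 1)). intros n. induction n.
  - replace (a - 1 + Z.of_nat 0)%Z with (a-1)%Z by lia. exact H0.
  - apply HS. lia. replace (a - 1 + Z.of_nat (S n) - 1)%Z with (a - 1 + Z.of_nat n)%Z by lia. exact IHn.
Qed.

Lemma sumZ_ext a b f g : (forall i, (a <= i <= b)%Z -> f i = g i) -> sumZ a b f = sumZ a b g.
Proof.
  intros H. destruct (Z_lt_le_dec b a). rewrite !sumZ_empty; auto.
  revert H. pattern b. apply (sumZ_ind a); [|intros c Hc IH H|lia].
  - intros; rewrite !sumZ_empty; auto; lia.
  - rewrite !(sumZ_last a c) by lia. rewrite IH, H; auto; try lia. intros; apply H; lia.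
Qed.

Lemma sumZ_plus a b f g : sumZ a b (fun i => f i + g i) = sumZ a b f + sumZ a b g.
Proof.
  destruct (Z_lt_le_dec b a). rewrite !sumZ_empty; auto; ring.
  pattern b. apply (sumZ_ind a); [|intros c Hc IH|lia].
  - rewrite !sumZ_empty by lia; ring.
  - rewrite !(sumZ_last a c) by lia. rewrite IH. ring.
Qed.

Lemma sumZ_minus a b f g : sumZ a b (fun i => f i - g i) = sumZ a b f - sumZ a b g.
Proof.
  destruct (Z_lt_le_dec b a). rewrite !sumZ_empty; auto; ring.
  pattern b. apply (sumZ_ind a); [|intros c Hc IH|lia].
  - rewrite !sumZ_empty by lia; ring.
  - rewrite !(sumZ_last a c) by lia. rewrite IH. ring.
Qed.

Lemma sumZ_scal_l a b c f : c * sumZ a b f = sumZ a b (fun i => c * f i).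
Proof.
  destruct (Z_lt_le_dec b a). rewrite !sumZ_empty; auto; ring.
  pattern b. apply (sumZ_ind a); [|intros d Hd IH|lia].
  - rewrite !sumZ_empty by lia; ring.
  - rewrite !(sumZ_last a d) by lia. rewrite <- IH. ring.
Qed.

Lemma sumZ_scal_r a b c f : sumZ a b f * c = sumZ a b (fun i => f i * c).
Proof. rewrite Rmult_comm, sumZ_scal_l. apply sumZ_ext; intros; ring. Qed.

Lemma sumZ_split a m b f : (a - 1 <= m <= b)%Z -> sumZ a b f = sumZ a m f + sumZ (m+1) b f.
Proof.
  intros Hm. pattern b. apply (sumZ_ind (m+1)); [| intros c Hc IH | lia].
  - replace (m+1-1)%Z with m by lia. rewrite (sumZ_empty (m+1)) by lia. ring.
  - rewrite (sumZ_last a c) by lia. rewrite (sumZ_last (m+1) c) by lia. rewrite IH. ring.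
Qed.

Lemma sumZ_one a f : sumZ a a f = f a.
Proof. rewrite sumZ_last by lia. rewrite sumZ_empty by lia. ring. Qed.

Lemma sumZ_first a b f : (a <= b)%Z -> sumZ a b f = f a + sumZ (a+1) b f.
Proof. intros. rewrite (sumZ_split a a b) by lia. rewrite sumZ_one. ring. Qed.

Lemma sumZ_shift a b c f : sumZ a b (fun i => f (i + c)%Z) = sumZ (a+c) (b+c) f.
Proof.
  unfold sumZ. replace (b + c - (a + c) + 1)%Z with (b - a + 1)%Z by lia.
  f_equal. apply map_ext. intros i. f_equal. lia.
Qed.

Lemma sumZ_const a b c : (a - 1 <= b)%Z -> sumZ a b (fun _ => c) = IZR (b - a + 1) * c.
Proof.
  intros Hb. pattern b. apply (sumZ_ind a); [| intros d Hd IH | lia].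
  - rewrite sumZ_empty by lia. replace (a - 1 - a + 1)%Z with 0%Z by lia. rewrite Rmult_0_l; reflexivity.
  - rewrite sumZ_last by lia. rewrite IH.
    replace (d - a + 1)%Z with ((d - 1 - a + 1) + 1)%Z by lia. rewrite (plus_IZR (d - 1 - a + 1) 1). change (IZR 1) with 1; ring.
Qed.

Lemma sumZ_swap a b c d F :
  sumZ a b (fun j => sumZ c d (fun k => F j k)) = sumZ c d (fun k => sumZ a b (fun j => F j k)).
Proof.
  destruct (Z_lt_le_dec b a).
  { rewrite sumZ_empty by auto. symmetry. rewrite <- (Rmult_0_r (IZR (d - c + 1))).
    destruct (Z_lt_le_dec d c). rewrite sumZ_empty; auto. ring.
    rewrite <- sumZ_const by lia. apply sumZ_ext; intros; rewrite sumZ_empty; auto. }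
  pattern b. apply (sumZ_ind a); [|intros e He IH|lia].
  - rewrite sumZ_empty by lia. symmetry.
    destruct (Z_lt_le_dec d c). rewrite sumZ_empty; auto.
    rewrite <- (Rmult_0_r (IZR (d - c + 1))). rewrite <- sumZ_const by lia.
    apply sumZ_ext; intros; rewrite sumZ_empty; auto; lia.
  - rewrite sumZ_last by lia. rewrite IH. rewrite <- sumZ_plus.
    apply sumZ_ext. intros. rewrite (sumZ_last a e) by lia. reflexivity.
Qed.

Lemma sumZ_neg a b f : (a <= b)%Z -> (forall i, (a <= i <= b)%Z -> f i < 0) -> sumZ a b f < 0.
Proof.
  intros Hab. assert (Hab0 := Hab). revert Hab. pattern b. apply (sumZ_ind a); [|intros c Hc IH Hab H|lia].
  - intros; lia.
  - rewrite sumZ_last by lia. destruct (Z.eq_dec c a).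
    + subst. rewrite sumZ_empty by lia. specialize (H a ltac:(lia)). lra.
    + assert (sumZ a (c-1) f < 0). { apply IH. lia. intros; apply H; lia. } specialize (H c ltac:(lia)). lra.
Qed.


Lemma sumZ_quad n A B C : (0 <= n)%Z ->
  sumZ 1 n (fun b => A * IZR b ^ 2 + B * IZR b + C) =
  A * (IZR n * (IZR n + 1) * (2 * IZR n + 1) / 6) + B * (IZR n * (IZR n + 1) / 2) + C * IZR n.
Proof.
  intros Hn. pattern n. apply (sumZ_ind 1); [| intros c Hc IH | lia].
  - rewrite sumZ_empty by lia. simpl. field.
  - rewrite sumZ_last by lia. rewrite IH. rewrite minus_IZR. change (IZR 1) with 1. field.
Qed.

Lemma convex_neg (F F1 F2 : R -> R) :
  (forall t, 0 <= t <= 1 -> is_derive F t (F1 t)) ->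
  (forall t, 0 <= t <= 1 -> is_derive F1 t (F2 t)) ->
  (forall t, 0 <= t <= 1 -> 0 < F2 t) -> F 0 = 0 -> F 1 = 0 ->
  forall t, 0 < t < 1 -> F t < 0.
Proof.
  intros HF HF1 HF2 F0 F1e t Ht.
  apply Rnot_le_lt. intros Hc.
  destruct (MVT_cor2 F F1 0 t) as [a [Ha1 Ha2]]; [lra| intros; apply is_derive_Reals, HF; lra |].
  destruct (MVT_cor2 F F1 t 1) as [b [Hb1 Hb2]]; [lra| intros; apply is_derive_Reals, HF; lra |].
  destruct (MVT_cor2 F1 F2 a b) as [c [Hc1 Hc2]]; [lra| intros; apply is_derive_Reals, HF1; lra |].
  assert (F1 a >= 0). { rewrite F0 in Ha1. apply Rle_ge. 
    destruct (Rle_lt_dec 0 (F1 a)); auto. nra. }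
  assert (F1 b <= 0). { rewrite F1e in Hb1. destruct (Rle_lt_dec (F1 b) 0); auto. nra. }
  specialize (HF2 c ltac:(lra)). nra.
Qed.

Lemma ivt_pos h a b : a <= b -> (forall x, a <= x <= b -> continuity_pt h x) ->
  h a <= 0 -> 0 <= h b -> exists z, a <= z <= b /\ h z = 0.
Proof.
  intros Hab Hc Ha Hb.
  destruct (Req_dec (h a) 0). exists a; split; [lra|auto].
  destruct (Req_dec (h b) 0). exists b; split; [lra|auto].
  destruct (Req_dec a b). subst; lra.
  destruct (IVT_interv h a b) as [z Hz]; auto; try lra. exists z; tauto.
Qed.

Lemma ivt_aux h a b : a <= b -> (forall x, a <= x <= b -> continuity_pt h x) ->
  (h a <= 0 /\ 0 <= h b) \/ (0 <= h a /\ h b <= 0) -> exists z, a <= z <= b /\ h z = 0.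
Proof.
  intros Hab Hc [[Ha Hb]|[Ha Hb]].
  - apply ivt_pos; auto.
  - destruct (ivt_pos (fun x => - h x) a b) as [z [Hz1 Hz2]]; auto; try lra.
    intros; apply continuity_pt_opp; auto.
    exists z; split; auto; lra.
Qed.

Lemma ivt_val g2 v t1 t2 : 0 <= t1 <= 1 -> 0 <= t2 <= 1 ->
  (forall t, 0 <= t <= 1 -> continuity_pt g2 t) -> g2 t1 <= v -> v <= g2 t2 ->
  exists z, 0 <= z <= 1 /\ g2 z = v.
Proof.
  intros H1 H2 Hc Hv1 Hv2.
  destruct (ivt_aux (fun t => g2 t - v) (Rmin t1 t2) (Rmax t1 t2)) as [z [Hz1 Hz2]].
  - apply Rmin_Rmax.
  - intros. apply continuity_pt_minus. apply Hc. 
    split. apply Rle_trans with (Rmin t1 t2); [apply Rmin_glb; lra| lra].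
    apply Rle_trans with (Rmax t1 t2); [lra| apply Rmax_lub; lra].
    apply continuity_pt_const. intros ? ?; reflexivity.
  - unfold Rmin, Rmax. destruct (Rle_dec t1 t2); [left|right]; lra.
  - exists z. split; [|lra]. split.
    apply Rle_trans with (Rmin t1 t2); [apply Rmin_glb; lra| lra].
    apply Rle_trans with (Rmax t1 t2); [lra| apply Rmax_lub; lra].
Qed.

Lemma trap (g g1 g2 : R -> R) (k : Z) : (2 <= k)%Z ->
  (forall t, 0 <= t <= 1 -> is_derive g t (g1 t)) ->
  (forall t, 0 <= t <= 1 -> is_derive g1 t (g2 t)) ->
  (forall t, 0 <= t <= 1 -> continuity_pt g2 t) ->
  exists eta, 0 <= eta <= 1 /\
    sumZ 1 (k-1) (fun b => g (IZR b / IZR k)) - (IZR k - 1) / 2 * (g 0 + g 1)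
    = - (IZR k ^ 2 - 1) / (12 * IZR k) * g2 eta.
Proof.
  intros Hk Hg Hg1 Hc.
  assert (Kk : 2 <= IZR k) by (apply IZR_le; lia).
  set (kk := IZR k) in *.
  set (sg := sumZ 1 (k-1) (fun b => g (IZR b / kk))).
  set (c := (kk ^ 2 - 1) / (12 * kk)).
  assert (Hcpos : 0 < c). { unfold c. apply Rdiv_lt_0_compat; nra. }
  set (D := sg - (kk - 1) / 2 * (g 0 + g 1)).
  set (v := - D / c).
  assert (Hfin : forall eta, g2 eta = v -> D = - (kk ^ 2 - 1) / (12 * kk) * g2 eta).
  { intros eta He. rewrite He. unfold v, c. field. split; nra. }
  set (P := fun t => -(t * g 1 + (1 - t) * g 0) + v * t * (1 - t) / 2).
  set (dP := fun t => -(g 1 - g 0) + v * (1 - 2 * t) / 2).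
  assert (HP : forall t : R, is_derive P t (dP t)).
  { intros t. unfold P, dP. auto_derive; auto. clearbody v. simpl. field. }
  assert (HdP : forall t : R, is_derive dP t (- v)).
  { intros t. unfold dP. auto_derive; auto. clearbody v. simpl. field. }
  set (F := fun t => g t + P t).
  assert (HF : forall t, 0 <= t <= 1 -> is_derive F t (g1 t + dP t)).
  { intros. unfold F. apply (is_derive_plus g P); auto. }
  assert (HF1 : forall t, 0 <= t <= 1 -> is_derive (fun t => g1 t + dP t) t (g2 t + - v)).
  { intros. apply (is_derive_plus g1 dP); auto. }
  assert (F0 : F 0 = 0). { unfold F, P. field. }
  assert (F1 : F 1 = 0). { unfold F, P. field. }
  assert (Hsum : sumZ 1 (k - 1) (fun b => F (IZR b / kk)) = 0).
  { unfold F.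
    rewrite (sumZ_ext _ _ _ (fun b => g (IZR b / kk) - ((v / (2 * kk ^ 2)) * IZR b ^ 2 +
        ((g 1 - g 0) / kk - v / (2 * kk)) * IZR b + g 0))).
    2:{ intros. unfold P. field. lra. }
    rewrite sumZ_minus. fold sg. rewrite sumZ_quad by lia. rewrite minus_IZR. fold kk.
    change (IZR 1) with 1. unfold v, D, c. field. split; nra. }
  assert (Hpts : forall b, (1 <= b <= k - 1)%Z -> 0 < IZR b / kk < 1).
  { intros b Hb. assert (1 <= IZR b) by (apply IZR_le; lia).
    assert (IZR b <= kk - 1). { unfold kk. replace (IZR k - 1) with (IZR (k-1)) by (rewrite minus_IZR; reflexivity).
      apply IZR_le; lia. }
    split. apply Rdiv_lt_0_compat; lra. apply Rmult_lt_reg_r with kk. lra.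
    unfold Rdiv. rewrite Rmult_assoc, Rinv_l by lra. lra. }
  destruct (classic (exists t1, 0 <= t1 <= 1 /\ g2 t1 <= v)) as [[t1 [Ht1 Hv1]]|Hn1].
  - destruct (classic (exists t2, 0 <= t2 <= 1 /\ v <= g2 t2)) as [[t2 [Ht2 Hv2]]|Hn2].
    + destruct (ivt_val g2 v t1 t2) as [z [Hz1 Hz2]]; auto.
      exists z. split; auto.
    + exfalso.
      assert (Hneg : forall t, 0 < t < 1 -> - F t < 0).
      { apply (convex_neg (fun t => - F t) (fun t => - (g1 t + dP t)) (fun t => - (g2 t + - v))).
        - intros. apply (is_derive_opp F). auto.
        - intros. apply (is_derive_opp (fun t => g1 t + dP t)). auto.
        - intros t Ht. assert (~ (v <= g2 t)) by (intro; apply Hn2; exists t; auto). lra.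
        - rewrite F0; ring.
        - rewrite F1; ring. }
      assert (sumZ 1 (k - 1) (fun b => - F (IZR b / kk)) < 0).
      { apply sumZ_neg. lia. intros; apply Hneg, Hpts; auto. }
      rewrite <- (sumZ_ext _ _ (fun b => -1 * F (IZR b / kk))) in H by (intros; ring).
      rewrite <- sumZ_scal_l, Hsum in H. lra.
  - exfalso.
    assert (Hneg : forall t, 0 < t < 1 -> F t < 0).
    { apply (convex_neg F (fun t => g1 t + dP t) (fun t => g2 t + - v)); auto.
      intros t Ht. assert (~ (g2 t <= v)) by (intro; apply Hn1; exists t; auto). lra. }
    assert (sumZ 1 (k - 1) (fun b => F (IZR b / kk)) < 0).
    { apply sumZ_neg. lia. intros; apply Hneg, Hpts; auto. }
    lra.
Qed.


Lemma phit_derivs phit x : C4_pos phit -> 0 < x ->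
  is_derive phit x (Derive_n phit 1 x) /\
  is_derive (Derive_n phit 1) x (Derive_n phit 2 x) /\
  continuity_pt (Derive_n phit 2) x.
Proof.
  intros H Hx. destruct (H x Hx) as [Hn _].
  split; [|split].
  - apply (Derive_correct phit). apply (Hn 1%nat). lia.
  - apply (Derive_correct (Derive_n phit 1)). apply (Hn 2%nat). lia.
  - apply continuity_pt_filterlim. apply (ex_derive_continuous (Derive_n phit 2)).
    apply (Hn 3%nat). lia.
Qed.

Lemma phi2 phit eps x : C4_pos phit -> 0 < eps -> 0 < eps * x ->
  Derive_n (phi_eps eps phit) 2 x = eps * Derive_n phit 2 (eps * x).
Proof.
  intros H He Hx. unfold phi_eps.
  rewrite (Derive_n_scal_l (fun r => phit (eps * r))).
  rewrite (Derive_n_comp_scal phit eps 2 x).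
  - simpl. field. lra.
  - exists (mkposreal _ Hx). intros z Hz. simpl in Hz.
    change (Rabs (z - eps * x) < eps * x) in Hz.
    apply Rabs_lt_between' in Hz.
    intros k Hk. destruct (H z ltac:(lra)) as [Hn _]. apply Hn. lia.
Qed.

Lemma eta_lemma phit eps k a b Ya Yb H : C4_pos phit -> 0 < eps -> (2 <= k)%Z ->
  0 < a -> 0 < b -> Ya = a / eps -> Yb = b / eps -> H <> 0 ->
  exists e, 0 <= e <= 1 /\
  sumZ 1 (k - 1) (fun i => phit (IZR k * a + IZR i * (b - a)))
   - (IZR k - 1) / 2 * (phit (IZR k * a) + phit (IZR k * b))
  = H * ((- (IZR k) ^ 3 + IZR k) / 12 *
        Derive_n (phi_eps eps phit) 2 (IZR k * (e * Ya + (1 - e) * Yb)))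
      * (eps * H * ((Yb - Ya) / H) ^ 2).
Proof.
  intros Hreg He Hk Ha Hb HYa HYb HH.
  assert (Kk : 2 <= IZR k) by (apply IZR_le; lia).
  set (kk := IZR k) in *.
  set (x0 := kk * a). set (d := kk * (b - a)).
  assert (Hpos : forall t, 0 <= t <= 1 -> 0 < x0 + t * d).
  { intros t Ht. unfold x0, d.
    assert (0 < (1 - t) * a + t * b) by nra.
    replace (kk * a + t * (kk * (b - a))) with (kk * ((1 - t) * a + t * b)) by ring. nra. }
  destruct (trap (fun t => phit (x0 + t * d))
                 (fun t => d * Derive_n phit 1 (x0 + t * d))
                 (fun t => d * (d * Derive_n phit 2 (x0 + t * d))) k Hk)
    as [eta [Heta Heq]].
  - intros t Ht. destruct (phit_derivs phit (x0 + t * d) Hreg (Hpos t Ht)) as [D1 _].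
    assert (Hl : is_derive (fun t : R => x0 + t * d) t d). { auto_derive; auto. ring. }
    exact (is_derive_comp phit (fun t => x0 + t * d) t _ _ D1 Hl).
  - intros t Ht. destruct (phit_derivs phit (x0 + t * d) Hreg (Hpos t Ht)) as [_ [D2 _]].
    assert (Hl : is_derive (fun t : R => x0 + t * d) t d). { auto_derive; auto. ring. }
    apply (is_derive_scal (fun t => Derive_n phit 1 (x0 + t * d))).
    exact (is_derive_comp (Derive_n phit 1) (fun t => x0 + t * d) t _ _ D2 Hl).
  - intros t Ht. destruct (phit_derivs phit (x0 + t * d) Hreg (Hpos t Ht)) as [_ [_ C2]].
    apply continuity_pt_mult. apply continuity_pt_const; intros ? ?; auto.
    apply continuity_pt_mult. apply continuity_pt_const; intros ? ?; auto.
    apply (continuity_pt_comp (fun t => x0 + t * d) (Derive_n phit 2)); auto.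
    apply continuity_pt_plus. apply continuity_pt_const; intros ? ?; auto.
    apply continuity_pt_mult. apply derivable_continuous_pt, derivable_pt_id.
    apply continuity_pt_const; intros ? ?; auto.
  - exists (1 - eta). split; [lra|].
    rewrite phi2; auto.
    2:{ rewrite HYa, HYb.
        replace (eps * (kk * ((1 - eta) * (a / eps) + (1 - (1 - eta)) * (b / eps))))
          with (x0 + eta * d) by (unfold x0, d; field; lra). apply Hpos; auto. }
    replace (eps * (kk * ((1 - eta) * Ya + (1 - (1 - eta)) * Yb))) with (x0 + eta * d)
      by (rewrite HYa, HYb; unfold x0, d; field; lra).
    rewrite (sumZ_ext _ _ _ (fun b0 => phit (x0 + IZR b0 / kk * d))).
    2:{ intros i Hi. f_equal. unfold x0, d. field. lra. }
    replace (phit x0) with (phit (x0 + 0 * d)) by (f_equal; ring).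
    replace (phit (kk * b)) with (phit (x0 + 1 * d)) by (f_equal; unfold x0, d; ring).
    fold kk in Heq. rewrite Heq. rewrite HYa, HYb. unfold d. field. lra.
Qed.


Definition rr (y : Z -> R) (ell : Z -> Z) (j : Z) : R :=
  (y (ell j) - y (ell (j-1)%Z)) / IZR (ell j - ell (j-1))%Z.

Definition QQ (s : Z) (phit : R -> R) (y : Z -> R) (ell : Z -> Z) (j : Z) : R :=
  sumZ 1 s (fun k => (IZR k - 1) / 2 * phit (IZR k * rr y ell j)).

Lemma mono_e (e : Z -> Z) : (forall j, (e (j-1) < e j)%Z) -> forall a b, (a <= b)%Z -> (e a <= e b)%Z.
Proof.
  intros He a b Hab. replace b with (a + Z.of_nat (Z.to_nat (b - a)))%Z by lia.
  induction (Z.to_nat (b - a)) as [|n IH].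
  - replace (a + Z.of_nat 0)%Z with a by lia; lia.
  - specialize (He (a + Z.of_nat (S n))%Z).
    replace (a + Z.of_nat (S n) - 1)%Z with (a + Z.of_nat n)%Z in He by lia. lia.
Qed.

Lemma ymono (y : Z -> R) : (forall l, y l < y (l+1)%Z) -> forall a b, (a < b)%Z -> y a < y b.
Proof.
  intros Hy a b Hab. replace b with (a + Z.of_nat (S (Z.to_nat (b - a - 1))))%Z by lia.
  induction (Z.to_nat (b - a - 1)) as [|n IH].
  - replace (a + Z.of_nat 1)%Z with (a+1)%Z by lia. apply Hy.
  - specialize (Hy (a + Z.of_nat (S n))%Z).
    replace (a + Z.of_nat (S n) + 1)%Z with (a + Z.of_nat (S (S n)))%Z in Hy by lia. lra.
Qed.

Lemma yper (y : Z -> R) (P : Z) : (forall l, y (l + 1 + P)%Z - y (l + P)%Z = y (l+1)%Z - y l) ->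
  forall l, y (l + P)%Z - y l = y P - y 0%Z.
Proof.
  intros H. set (h := fun l => y (l + P)%Z - y l).
  assert (Hs : forall l, h (l+1)%Z = h l). { intros l. unfold h. specialize (H l). lra. }
  intros l. change (h l = y P - y 0%Z).
  replace (y P - y 0%Z) with (h 0%Z) by (unfold h; rewrite Z.add_0_l; reflexivity).
  pattern l. apply Z.peano_ind.
  - reflexivity.
  - intros x Hx. rewrite <- Z.add_1_r, Hs. auto.
  - intros x Hx. rewrite <- Hx. rewrite <- (Hs (Z.pred x)). f_equal. lia.
Qed.

Lemma sumZ_blocks (e : Z -> Z) F a b : (forall j, (e (j-1) < e j)%Z) -> (a <= b)%Z ->
  sumZ (e a) (e b - 1) F = sumZ (a+1) b (fun j => sumZ 0 (e j - e (j-1)%Z - 1)%Z (fun i => F (e (j-1) + i)%Z)).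
Proof.
  intros He Hab. assert (Hm := mono_e e He).
  assert (Hab0 := Hab). revert Hab. pattern b. apply (sumZ_ind a); [intros; lia | intros c Hc IH Hac | lia].
  destruct (Z.eq_dec c a).
  - subst. rewrite !sumZ_empty by lia. reflexivity.
  - rewrite (sumZ_split (e a) (e (c-1)%Z - 1)%Z (e c - 1)%Z).
    2:{ specialize (He c). specialize (Hm a (c-1)%Z ltac:(lia)). lia. }
    rewrite IH by lia. rewrite (sumZ_last (a+1) c) by lia. f_equal.
    rewrite (sumZ_ext 0 _ (fun i => F (e (c-1) + i)%Z) (fun i => F (i + e (c-1))%Z)) by (intros; f_equal; lia).
    rewrite sumZ_shift. f_equal; lia.
Qed.

Lemma assemble a1 SA b1 SB SG q1 SQ1 q0 SQ0 : a1 - b1 = q1 - q0 -> SA - SB - SG = SQ1 - SQ0 ->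
  (a1 + SA) - ((b1 + SB) + SG) = (q1 + SQ1) - (q0 + SQ0).
Proof. intros; lra. Qed.


Theorem proposition2p1
  (s M N : Z) (phit : R -> R) (rstar : R) (y : Z -> R) (ell : Z -> Z) (eps : R)
  (Hs : (1 <= s)%Z) (HM : (1 <= M)%Z) (HMN : (M < N)%Z)
  (Hreg : C4_pos phit)
  (Hrstar : 0 < rstar)
  (Hconv : forall r, 0 < r -> r <= rstar -> 0 <= Derive_n phit 2 r)
  (Hconc : forall r, rstar < r -> Derive_n phit 2 r < 0)
  (Hdecay : decays_at_infty phit)
  (Hincr : forall l : Z, y l < y (l + 1)%Z)
  (Hper : forall l : Z, y (l + 1 + 2 * N)%Z - y (l + 2 * N)%Z = y (l + 1)%Z - y l)
  (Hlm : ell (- M)%Z = (- N)%Z) (HlM : ell M = N)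
  (Hlinc : forall j : Z, (- M <= j < M)%Z -> (ell j < ell (j + 1))%Z)
  (Hlper : forall j : Z, ell (j + 2 * M)%Z = (ell j + 2 * N)%Z)
  (Hnu : forall j : Z, (s <= ell j - ell (j - 1)%Z)%Z)
  (Hlin : forall j i : Z, (0 <= i <= ell j - ell (j - 1)%Z)%Z ->
     y (ell (j - 1)%Z + i)%Z
     = y (ell (j - 1)%Z) + IZR i * ((y (ell j) - y (ell (j - 1)%Z)) / IZR (ell j - ell (j - 1)%Z)%Z))
  (Heps : 0 < eps) :
  exists eta : Z -> Z -> R,
    (forall j k : Z, (- M + 1 <= j <= M)%Z -> (2 <= k <= s)%Z ->
       0 <= eta j k <= 1) /\
    E_atom s N phit y =
      E_qc s M eps phit y ell +
      sumZ (- M + 1) M (fun j =>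
        Hn eps ell (j + 1)%Z *
        sumZ 2 s (fun k =>
          (- (IZR k) ^ 3 + IZR k) / 12 *
          Derive_n (phi_eps eps phit) 2
            (IZR k * (eta j k * Y1 eps y ell j + (1 - eta j k) * Y1 eps y ell (j + 1)%Z)))
        * (eps * Hn eps ell (j + 1)%Z * (Y2 eps y ell (j + 1)%Z) ^ 2)).
Proof.
  assert (Hell : forall j, (ell (j-1)%Z < ell j)%Z) by (intro j; specialize (Hnu j); lia).
  assert (Hmono := mono_e ell Hell).
  assert (Hym := ymono y Hincr).
  assert (Hnuz : forall j, 0 < IZR (ell j - ell (j-1)%Z)).
  { intros j. apply IZR_lt. specialize (Hell j). lia. }
  assert (Hrpos : forall j, 0 < rr y ell j).
  { intros j. unfold rr. apply Rdiv_lt_0_compat; auto.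
    specialize (Hym (ell (j-1)%Z) (ell j) (Hell j)). lra. }
  assert (Hlin1 : forall j m, (ell (j-1)%Z <= m <= ell j)%Z ->
            y m = y (ell (j-1)%Z) + IZR (m - ell (j-1)%Z) * rr y ell j).
  { intros j m Hm. specialize (Hlin j (m - ell (j-1)%Z)%Z ltac:(lia)).
    replace (ell (j-1)%Z + (m - ell (j-1)%Z))%Z with m in Hlin by lia. exact Hlin. }
  assert (Hlin2 : forall j m, (ell j <= m <= ell (j+1)%Z)%Z ->
            y m = y (ell j) + IZR (m - ell j) * rr y ell (j+1)%Z).
  { intros j m Hm. pose proof (Hlin1 (j+1)%Z m) as H0.
    replace (j+1-1)%Z with j in H0 by lia. apply H0; lia. }
  assert (HY : forall j, y (ell j) = y (ell (j-1)%Z) + IZR (ell j - ell (j-1)%Z) * rr y ell j).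
  { intros j. unfold rr. field. specialize (Hnuz j). lra. }
  assert (HY1 : forall j, Y1 eps y ell j = rr y ell j / eps).
  { intros j. unfold Y1, Yn, Xn, rr. specialize (Hnuz j). rewrite minus_IZR in *. field.
    split; [lra|]. split; [lra|]. intro Hc.
    assert (eps * (IZR (ell j) - IZR (ell (j - 1)%Z)) = 0) by lra. nra. }
  assert (Hyp := yper y (2 * N) Hper).
  assert (Hrper : rr y ell (M+1)%Z = rr y ell (-M+1)%Z).
  { unfold rr. pose proof (Hlper (-M+1)%Z) as Hl.
    replace (-M+1+2*M)%Z with (M+1)%Z in Hl by lia.
    replace (M+1-1)%Z with M by lia. replace (-M+1-1)%Z with (-M)%Z by lia.
    rewrite Hl, HlM, Hlm.
    replace (ell (-M+1)%Z + 2*N - N)%Z with (ell (-M+1)%Z - - N)%Z by lia.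
    pose proof (Hyp (ell (-M+1)%Z)) as H1. pose proof (Hyp (-N)%Z) as H2.
    replace (-N + 2*N)%Z with N in H2 by lia.
    f_equal. lra. }
  assert (Heta : forall j k, exists e, (2 <= k)%Z -> 0 <= e <= 1 /\
     sumZ 1 (k - 1) (fun i => phit (IZR k * rr y ell j + IZR i * (rr y ell (j+1)%Z - rr y ell j)))
     - (IZR k - 1) / 2 * (phit (IZR k * rr y ell j) + phit (IZR k * rr y ell (j+1)%Z))
     = Hn eps ell (j + 1)%Z * ((- (IZR k) ^ 3 + IZR k) / 12 *
          Derive_n (phi_eps eps phit) 2
            (IZR k * (e * Y1 eps y ell j + (1 - e) * Y1 eps y ell (j + 1)%Z)))
        * (eps * Hn eps ell (j + 1)%Z * (Y2 eps y ell (j + 1)%Z) ^ 2)).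
  { intros j k. destruct (Z_le_gt_dec 2 k) as [Hk|Hk].
    - assert (HH : Hn eps ell (j+1)%Z <> 0).
      { unfold Hn, Xn. replace (j+1-2)%Z with (j-1)%Z by lia.
        pose proof (Hell (j+1)%Z) as H1. replace (j+1-1)%Z with j in H1 by lia.
        pose proof (Hell j) as H2.
        assert (IZR (ell (j-1)%Z) < IZR (ell (j+1)%Z)) by (apply IZR_lt; lia). nra. }
      destruct (eta_lemma phit eps k (rr y ell j) (rr y ell (j+1)%Z) (Y1 eps y ell j)
                 (Y1 eps y ell (j+1)%Z) (Hn eps ell (j+1)%Z) Hreg Heps Hk (Hrpos j) (Hrpos (j+1)%Z)
                 (HY1 j) (HY1 (j+1)%Z) HH) as [e [He Heq]].
      exists e. intros _. split; auto. rewrite Heq. unfold Y2.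
      replace (j+1-1)%Z with j by lia. reflexivity.
    - exists 0. intros; lia. }
  assert (Heta2 : forall j, exists f : Z -> R, forall k, (2 <= k)%Z -> 0 <= f k <= 1 /\
     sumZ 1 (k - 1) (fun i => phit (IZR k * rr y ell j + IZR i * (rr y ell (j+1)%Z - rr y ell j)))
     - (IZR k - 1) / 2 * (phit (IZR k * rr y ell j) + phit (IZR k * rr y ell (j+1)%Z))
     = Hn eps ell (j + 1)%Z * ((- (IZR k) ^ 3 + IZR k) / 12 *
          Derive_n (phi_eps eps phit) 2
            (IZR k * (f k * Y1 eps y ell j + (1 - f k) * Y1 eps y ell (j + 1)%Z)))
        * (eps * Hn eps ell (j + 1)%Z * (Y2 eps y ell (j + 1)%Z) ^ 2)).
  { intros j. destruct (functional_choice _ (Heta j)) as [f Hf]. exists f. exact Hf. }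
  destruct (functional_choice _ Heta2) as [eta Hspec].
  exists eta. split.
  { intros j k Hj Hk. apply Hspec; lia. }

  assert (HA : E_atom s N phit y = sumZ 1 s (fun k => sumZ (-M+1) M (fun j =>
      IZR (ell j - ell (j-1)%Z - k + 1) * phit (IZR k * rr y ell j)
      + sumZ 1 (k - 1) (fun i => phit (IZR k * rr y ell j + IZR i * (rr y ell (j+1)%Z - rr y ell j)))))).
  { unfold E_atom. apply sumZ_ext. intros k Hk.
    rewrite (sumZ_ext _ _ _ (fun l => (fun m => phit (y (m + k)%Z - y m)) (l + -1)%Z)).
    2:{ intros l _. cbv beta. f_equal. f_equal; f_equal; lia. }
    rewrite (sumZ_shift (-N+1) N (-1) (fun m => phit (y (m + k)%Z - y m))).
    replace (-N+1 + -1)%Z with (ell (-M)%Z) by (rewrite Hlm; lia).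
    replace (N + -1)%Z with (ell M - 1)%Z by (rewrite HlM; lia).
    rewrite (sumZ_blocks ell _ (-M) M Hell) by lia.
    replace (-M+1)%Z with (-M+1)%Z by lia.
    apply sumZ_ext. intros j Hj. cbv beta.
    pose proof (Hnu j) as Hnj. pose proof (Hnu (j+1)%Z) as Hnj1.
    replace (j+1-1)%Z with j in Hnj1 by lia.
    rewrite (sumZ_split 0 (ell j - ell (j-1)%Z - k)%Z) by lia.
    f_equal.
    - rewrite (sumZ_ext _ _ _ (fun _ => phit (IZR k * rr y ell j))).
      + rewrite sumZ_const by lia. f_equal. f_equal. lia.
      + intros i Hi. f_equal.
        rewrite (Hlin1 j (ell (j-1)%Z + i + k)%Z) by lia.
        rewrite (Hlin1 j (ell (j-1)%Z + i)%Z) by lia.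
        replace (ell (j-1)%Z + i + k - ell (j-1)%Z)%Z with (i + k)%Z by lia.
        replace (ell (j-1)%Z + i - ell (j-1)%Z)%Z with i by lia. rewrite plus_IZR. ring.
    - replace (ell j - ell (j-1)%Z - k + 1)%Z with (1 + (ell j - ell (j-1)%Z - k))%Z by lia.
      replace (ell j - ell (j-1)%Z - 1)%Z with (k - 1 + (ell j - ell (j-1)%Z - k))%Z by lia.
      rewrite <- sumZ_shift.
      apply sumZ_ext. intros b Hb. f_equal.
      rewrite (Hlin2 j (ell (j-1)%Z + (b + (ell j - ell (j-1)%Z - k)) + k)%Z) by lia.
      rewrite (Hlin1 j (ell (j-1)%Z + (b + (ell j - ell (j-1)%Z - k)))%Z) by lia.
      rewrite (HY j).
      replace (ell (j-1)%Z + (b + (ell j - ell (j-1)%Z - k)) + k - ell j)%Z with b by lia.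
      replace (ell (j-1)%Z + (b + (ell j - ell (j-1)%Z - k)) - ell (j-1)%Z)%Z
        with ((ell j - ell (j-1)%Z) - k + b)%Z by lia.
      rewrite (plus_IZR (_ - k) b), (minus_IZR _ k). ring. }
  assert (HQC : E_qc s M eps phit y ell = sumZ (-M+1) M (fun j => sumZ 1 s (fun k =>
      IZR (ell j - ell (j-1)%Z) * phit (IZR k * rr y ell j)))).
  { unfold E_qc. apply sumZ_ext; intros j Hj. unfold nun, phi_cb. rewrite sumZ_scal_l.
    apply sumZ_ext; intros k Hk. unfold phi_eps. rewrite HY1.
    replace (eps * (IZR k * (rr y ell j / eps))) with (IZR k * rr y ell j) by (field; lra).
    field; lra. }
  rewrite HA, sumZ_swap, HQC.
  apply Rminus_diag_uniq. rewrite <- sumZ_plus, <- sumZ_minus.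
  rewrite (sumZ_ext _ _ _ (fun j => QQ s phit y ell (j+1)%Z - QQ s phit y ell j)).
  2:{ intros j Hj. rewrite sumZ_scal_l, sumZ_scal_r.
      rewrite (sumZ_ext 2 s _ (fun k =>
         sumZ 1 (k - 1) (fun i => phit (IZR k * rr y ell j + IZR i * (rr y ell (j+1)%Z - rr y ell j)))
         - (IZR k - 1) / 2 * (phit (IZR k * rr y ell j) + phit (IZR k * rr y ell (j+1)%Z)))).
      2:{ intros k Hk. symmetry. apply Hspec. lia. }
      unfold QQ. rewrite !(sumZ_first 1 s) by lia. replace (1+1)%Z with 2%Z by lia.
      apply assemble.
      - rewrite sumZ_empty by lia.
        replace (ell j - ell (j-1)%Z - 1 + 1)%Z with (ell j - ell (j-1)%Z)%Z by lia.
        change (IZR 1) with 1. field.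
      - rewrite <- !sumZ_minus. apply sumZ_ext. intros k Hk.
        rewrite (plus_IZR (_ - k) 1), (minus_IZR _ k). change (IZR 1) with 1. field. }
  rewrite sumZ_minus, (sumZ_shift (-M+1) M 1 (QQ s phit y ell)).
  rewrite (sumZ_last (-M+1+1) (M+1)) by lia. rewrite (sumZ_first (-M+1) M) by lia.
  replace (M+1-1)%Z with M by lia.
  replace (QQ s phit y ell (M+1)%Z) with (QQ s phit y ell (-M+1)%Z) by (unfold QQ; rewrite Hrper; reflexivity). ring.
Qed.
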